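(* Let $S\subseteq[d]$ with $|S|=\kappa\ge2$, let $\theta\in\mathbb{R}^d$ satisfy $|\theta_i|\le b$ for all $i$, and let $\sigma$ be a ranking of $S$ drawn from the PL model with parameter $\theta$, with $\sigma^{-1}(i)$ denoting the position of item $i$. Then for any two distinct items $i,i'\in S$ and any $1\le\ell,\ell_1,\ell_2\le\kappa-1$: $$\mathbb{P}_\theta\big[\sigma^{-1}(i)>\ell,\ \sigma^{-1}(i')>\ell\big]\ \ge\ \frac{e^{-4b}(\kappa-\ell)(\kappa-\ell-1)}{\kappa(\kappa-1)}\Big(1-\frac{\ell}{\kappa}\Big)^{2e^{2b}-2},$$ $$\mathbb{P}_\theta\big[\sigma^{-1}(i)=\ell\big]\ \le\ \frac{e^{6b}}{\kappa-\ell},$$ $$\mathbb{P}_\theta\big[\sigma^{-1}(i)=\ell_1,\ \sigma^{-1}(i')=\ell_2\big]\ \le\ \frac{e^{10b}}{(\kappa-\ell_1-1)(\kappa-\ell_2)},$$ where the last right-hand side is interpreted as $+\infty$ if its denominator vanishes.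
   Context: PL model: items $[d]$, parameter $\theta\in\mathbb{R}^d$; when a set $S$ is offered, a ranking $\sigma:[|S|]\to S$ (a bijection from positions to items; position 1 is most preferred) is drawn with probability $\prod_{i=1}^{|S|-1}e^{\theta_{\sigma(i)}}/\sum_{i'=i}^{|S|}e^{\theta_{\sigma(i')}}$. *)

(* Defs.v *)
From Stdlib Require Import Reals.
From mathcomp Require Import all_boot.
Set Implicit Arguments. Unset Strict Implicit. Unset Printing Implicit Defensive.

(* A ranking of S : a bijection sigma from positions 'I_|S| (0-based; position
   j here is position j+1 of the paper) onto S, i.e. an injective map with
   values in S (injective + #|domain| = #|S| gives bijectivity). *)
Definition ranking (d : nat) (S : {set 'I_d}) (sigma : {ffun 'I_#|S| -> 'I_d}) : bool :=
  injectiveb sigma && [forall j, sigma j \in S].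

Definition PL_prob (d : nat) (theta : 'I_d -> R) (S : {set 'I_d})
  (sigma : {ffun 'I_#|S| -> 'I_d}) : R :=
  \big[Rmult/R1]_(i < #|S| | (i.+1 < #|S|)%N)
     Rdiv (exp (theta (sigma i)))
      (\big[Rplus/R0]_(i' < #|S| | (i <= i')%N) exp (theta (sigma i'))).

Definition PL_P (d : nat) (theta : 'I_d -> R) (S : {set 'I_d})
  (E : {ffun 'I_#|S| -> 'I_d} -> bool) : R :=
  \big[Rplus/R0]_(sigma : {ffun 'I_#|S| -> 'I_d} | ranking sigma && E sigma)
     PL_prob theta sigma.
Arguments PL_P d theta S E : clear implicits.
Arguments PL_P {d}.

Definition pos_is (d : nat) (S : {set 'I_d}) (sigma : {ffun 'I_#|S| -> 'I_d})
  (x : 'I_d) (p : nat) : bool :=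
  [exists j : 'I_#|S|, (sigma j == x) && (j.+1 == p)].

Definition pos_gt (d : nat) (S : {set 'I_d}) (sigma : {ffun 'I_#|S| -> 'I_d})
  (x : 'I_d) (l : nat) : bool :=
  [exists j : 'I_#|S|, (sigma j == x) && (l < j.+1)%N].

(* Main.v *)
Require Import Defs.
From HB Require Import structures.
From Stdlib Require Import Reals Lra Lia.
From mathcomp Require Import all_boot.
Set Implicit Arguments. Unset Strict Implicit. Unset Printing Implicit Defensive.
Local Open Scope R_scope.

HB.instance Definition _ := Monoid.isComLaw.Build R R0 Rplus
  (fun x y z => esym (Rplus_assoc x y z)) Rplus_comm Rplus_0_l.
HB.instance Definition _ := Monoid.isComLaw.Build R R1 Rmult
  (fun x y z => esym (Rmult_assoc x y z)) Rmult_comm Rmult_1_l.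


Lemma sumR_le (T : eqType) (s : seq T) (F G : T -> R) :
  (forall x, x \in s -> F x <= G x) -> \big[Rplus/R0]_(x <- s) F x <= \big[Rplus/R0]_(x <- s) G x.
Proof.
elim: s => [|y s IH] H; first by rewrite !big_nil; lra.
rewrite !big_cons; apply Rplus_le_compat; first by apply H; rewrite mem_head.
by apply IH => x xs; apply H; rewrite inE xs orbT.
Qed.

Lemma sumR_distr (T : Type) (s : seq T) (F : T -> R) a :
  a * \big[Rplus/R0]_(x <- s) F x = \big[Rplus/R0]_(x <- s) (a * F x).
Proof. elim: s => [|y s IH]; rewrite ?big_nil ?big_cons; [ring | rewrite -IH; ring]. Qed.

Lemma sumR_const (T : Type) (s : seq T) c :
  \big[Rplus/R0]_(x <- s) c = INR (size s) * c.
Proof. elim: s => [|y s IH]; rewrite ?big_nil ?big_cons; [simpl; ring | rewrite IH; change (size (y :: s)) with (S (size s)); rewrite S_INR; ring]. Qed.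

Lemma sumR_pick (T : eqType) (s : seq T) (x : T) a :
  uniq s -> \big[Rplus/R0]_(y <- s) (if y == x then a else 0) = if x \in s then a else 0.
Proof.
elim: s => [|y s IH] /=; first by rewrite big_nil.
move=> /andP[ys us]; rewrite big_cons IH // inE.
case: (y =P x) => [<-|ne]; first by rewrite eqxx (negbTE ys) /=; ring.
have -> : (x == y) = false by apply/eqP => E; apply ne; rewrite E.
rewrite /=; ring.
Qed.

Lemma sumR_ge0 (T : Type) (s : seq T) (F : T -> R) :
  (forall x, 0 <= F x) -> 0 <= \big[Rplus/R0]_(x <- s) F x.
Proof. move=> H; elim: s => [|y s IH]; rewrite ?big_nil ?big_cons; [lra | have := H y; lra]. Qed.

Section PL.
Variable (T : eqType) (w : T -> R).
Hypothesis wpos : forall x, 0 < w x.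

Definition sw (s : seq T) := \big[Rplus/R0]_(y <- s) w y.

Fixpoint plr (s : seq T) : R :=
  match s with [::] => 1 | y :: s' => w y / (w y + sw s') * plr s' end.

Definition EE (t : seq T) (P : seq T -> bool) :=
  \big[Rplus/R0]_(s <- permutations t) (if P s then plr s else 0).

Lemma sw_perm s1 s2 : perm_eq s1 s2 -> sw s1 = sw s2.
Proof. by move=> H; rewrite /sw (perm_big _ H). Qed.

Lemma sw_rem t y : y \in t -> w y + sw (rem y t) = sw t.
Proof. by move=> yt; rewrite (sw_perm (perm_to_rem yt)) /sw big_cons. Qed.

Lemma sw_pos t : (0 < size t)%N -> 0 < sw t.
Proof.
case: t => // y t _; rewrite /sw big_cons.
have := sumR_ge0 t (fun x => Rlt_le _ _ (wpos x)); have := wpos y; lra.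
Qed.

Lemma plr_ge0 s : 0 <= plr s.
Proof.
elim: s => [|y s IH] /=; first lra.
apply Rmult_le_pos => //; apply Rlt_le, Rdiv_lt_0_compat; first exact: wpos.
have := sumR_ge0 s (fun x => Rlt_le _ _ (wpos x)); rewrite -/(sw s); have := wpos y; lra.
Qed.

Lemma EE_decomp t P : uniq t -> (0 < size t)%N ->
  EE t P = \big[Rplus/R0]_(y <- t) (w y / sw t * EE (rem y t) (fun s => P (y :: s))).
Proof.
move=> ut st; rewrite /EE (perm_big _ (permutationsE st)) undup_id //.
rewrite big_allpairs_dep; apply: eq_big_seq => y yt.
rewrite sumR_distr; apply: eq_big_seq => s.
rewrite mem_permutations => ps /=.
rewrite (sw_perm ps) sw_rem //; case: (P _); ring.
Qed.

Lemma EE_ext t P Q : (forall s, P s = Q s) -> EE t P = EE t Q.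
Proof. by move=> H; rewrite /EE; apply: eq_bigr => s _; rewrite H. Qed.

Lemma EE_false t : EE t (fun _ => false) = 0.
Proof. by rewrite /EE big1. Qed.

Lemma EE_ge0 t P : 0 <= EE t P.
Proof. apply sumR_ge0 => s; case: (P s); [exact: plr_ge0 | lra]. Qed.

Lemma EE_true t : uniq t -> EE t (fun _ => true) = 1.
Proof.
move: {2}(size t) (erefl (size t)) => n; elim: n t => [|n IH] t st ut.
  by case: t st ut => // _ _; rewrite /EE /= big_cons big_nil /=; ring.
rewrite EE_decomp ?st //.
have -> : \big[Rplus/R0]_(y <- t) (w y / sw t * EE (rem y t) (fun=> true))
   = \big[Rplus/R0]_(y <- t) (w y * / sw t).
  apply: eq_big_seq => y yt; rewrite IH ?rem_uniq //; last by rewrite size_rem // st.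
  rewrite /Rdiv; ring.
have -> : \big[Rplus/R0]_(y <- t) (w y * / sw t) = / sw t * sw t.
  by rewrite /sw sumR_distr; apply: eq_bigr => y _; ring.
rewrite Rinv_l //.
by have := sw_pos (t := t); rewrite st => /(_ isT); lra.
Qed.

Lemma avg_le t (a : T -> R) M : uniq t -> (0 < size t)%N ->
  (forall y, y \in t -> a y <= M) ->
  \big[Rplus/R0]_(y <- t) (w y / sw t * a y) <= M.
Proof.
move=> ut st H; have sp := sw_pos st.
apply Rle_trans with (\big[Rplus/R0]_(y <- t) (w y / sw t * M)).
  apply sumR_le => y yt; apply Rmult_le_compat_l; last exact: H.
  apply Rlt_le, Rdiv_lt_0_compat => //; exact: wpos.
have -> : \big[Rplus/R0]_(y <- t) (w y / sw t * M) = M / sw t * sw t.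
  by rewrite /sw sumR_distr; apply: eq_bigr => y _; rewrite /Rdiv; ring.
right; field; lra.
Qed.

Lemma avg_ge t (a : T -> R) M : uniq t -> (0 < size t)%N ->
  (forall y, y \in t -> M <= a y) ->
  M <= \big[Rplus/R0]_(y <- t) (w y / sw t * a y).
Proof.
move=> ut st H; have sp := sw_pos st.
apply Rle_trans with (\big[Rplus/R0]_(y <- t) (w y / sw t * M)); last first.
  apply sumR_le => y yt; apply Rmult_le_compat_l; last exact: H.
  apply Rlt_le, Rdiv_lt_0_compat => //; exact: wpos.
have -> : \big[Rplus/R0]_(y <- t) (w y / sw t * M) = M / sw t * sw t.
  by rewrite /sw sumR_distr; apply: eq_bigr => y _; rewrite /Rdiv; ring.
right; field; lra.
Qed.

Variables (wl wh : R).
Hypothesis wl_pos : 0 < wl.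
Hypothesis wb : forall x, wl <= w x <= wh.
Hypothesis wh_pos : 0 < wh.

Lemma sw_lb t : INR (size t) * wl <= sw t.
Proof. rewrite -sumR_const /sw; apply sumR_le => y _; exact: (proj1 (wb y)). Qed.

Lemma pick_bound t x A : uniq t -> (0 < size t)%N -> 0 <= A ->
  \big[Rplus/R0]_(y <- t) (w y / sw t * (if y == x then A else 0))
   <= wh / (INR (size t) * wl) * A.
Proof.
move=> ut st A0; have sp := sw_pos st.
have -> : \big[Rplus/R0]_(y <- t) (w y / sw t * (if y == x then A else 0))
   = \big[Rplus/R0]_(y <- t) (if y == x then w x / sw t * A else 0).
  by apply: eq_bigr => y _; case: eqP => [->|_]; ring.
have np : 0 < INR (size t) * wl.
  by apply Rmult_lt_0_compat => //; apply lt_0_INR; apply/ltP.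
rewrite sumR_pick //; case: (x \in t); last first.
  by apply Rmult_le_pos => //; apply Rlt_le, Rdiv_lt_0_compat => //; have := wpos x; have := wb x; lra.
apply Rmult_le_compat_r => //; unfold Rdiv; apply Rmult_le_compat.
- exact: Rlt_le (wpos x).
- exact: Rlt_le (Rinv_0_lt_compat _ sp).
- exact: (proj2 (wb x)).
- apply Rinv_le_contravar => //; exact: sw_lb.
Qed.

Lemma INR_pred n : (0 < n)%N -> INR n.-1 = INR n - 1.
Proof. by case: n => // n _; rewrite S_INR /=; ring. Qed.

Lemma EE_pos j : forall t x, uniq t -> (j < size t)%N ->
  EE t (fun s => index x s == j) <= wh / ((INR (size t) - INR j) * wl).
Proof.
elim: j => [|j IH] t x ut jt.
  rewrite EE_decomp //.
  apply Rle_trans with (\big[Rplus/R0]_(y <- t) (w y / sw t * (if y == x then 1 else 0))).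
    apply sumR_le => y yt; apply Rmult_le_compat_l.
      apply Rlt_le, Rdiv_lt_0_compat; [exact: wpos | exact: sw_pos].
    case: (eqVneq y x) => [->|ne].
      by rewrite (EE_ext _ (Q := fun=> true)) ?EE_true ?rem_uniq //; [lra | move=> s /=; rewrite eqxx].
    rewrite (EE_ext _ (Q := fun=> false)) ?EE_false; first lra.
    by move=> s /=; rewrite (negbTE ne).
  by rewrite /= Rminus_0_r -[X in _ <= X]Rmult_1_r; apply pick_bound => //; lra.
have n0 : (0 < size t)%N by apply: leq_ltn_trans jt.
have Mpos : 0 < (INR (size t) - INR j.+1) * wl.
  apply Rmult_lt_0_compat => //; apply Rlt_Rminus, lt_INR; exact/ltP.
rewrite EE_decomp //; apply avg_le => // y yt.
case: (eqVneq y x) => [->|ne].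
  rewrite (EE_ext _ (Q := fun=> false)) ?EE_false; last by move=> s /=; rewrite eqxx.
  apply Rlt_le, Rdiv_lt_0_compat => //; have := wpos x; have := wb x; lra.
rewrite (EE_ext _ (Q := fun s => index x s == j)); last first.
  by move=> s /=; rewrite (negbTE ne).
have -> : INR (size t) - INR j.+1 = INR (size (rem y t)) - INR j.
  by rewrite size_rem // INR_pred // S_INR; ring.
apply IH; first exact: rem_uniq.
by rewrite size_rem //; case: (size t) jt n0.
Qed.


Lemma EE_mono t (P Q : seq T -> bool) : (forall s, P s -> Q s) -> EE t P <= EE t Q.
Proof.
move=> H; apply sumR_le => s _; case E: (P s); first by rewrite (H _ E); lra.
case: (Q s); [exact: plr_ge0 | lra].
Qed.

Lemma B_pos n j : (j < n)%N -> 0 < wh / ((INR n - INR j) * wl).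
Proof.
move=> jn; apply Rdiv_lt_0_compat.
  by have := wh_pos.
apply Rmult_lt_0_compat => //; apply Rlt_0_minus, lt_INR; exact/ltP.
Qed.

Lemma B_shift n j : (0 < n)%N ->
  wh / ((INR n.-1 - INR j) * wl) = wh / ((INR n - INR j.+1) * wl).
Proof. by move=> n0; rewrite INR_pred // S_INR; f_equal; ring. Qed.

Lemma EE_joint0 t x x' j2 : uniq t -> x != x' -> (j2 < size t)%N ->
  EE t (fun s => (index x s == 0%N) && (index x' s == j2))
   <= wh / ((INR (size t) - INR 0) * wl) * (wh / ((INR (size t) - INR j2) * wl)).
Proof.
move=> ut nx jt; have n0 : (0 < size t)%N by apply: leq_ltn_trans jt.
set A := wh / ((INR (size t) - INR j2) * wl).
have A0 := B_pos jt.
rewrite EE_decomp //.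
apply Rle_trans with (\big[Rplus/R0]_(y <- t) (w y / sw t * (if y == x then A else 0))).
  apply sumR_le => y yt; apply Rmult_le_compat_l.
    apply Rlt_le, Rdiv_lt_0_compat; [exact: wpos | exact: sw_pos].
  case: (eqVneq y x) yt => [->|ne] yt; last first.
    by rewrite (EE_ext _ (Q := fun=> false)) ?EE_false; [lra | move=> s /=; rewrite (negbTE ne)].
  case: j2 @A jt A0 => [|j] A jt A0.
    rewrite (EE_ext _ (Q := fun=> false)) ?EE_false; first exact: Rlt_le A0.
    by move=> s /=; rewrite eqxx eq_sym (negbTE nx).
  rewrite (EE_ext _ (Q := fun s => index x' s == j)); last first.
    by move=> s /=; rewrite eqxx eq_sym (negbTE nx).
  rewrite /A -B_shift //; have := @EE_pos j (rem x t) x' (rem_uniq x ut).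
  rewrite size_rem //; apply; by case: (size t) jt.
change (INR 0) with 0; rewrite Rminus_0_r; apply pick_bound => //; exact: Rlt_le A0.
Qed.

Lemma EE_joint n : forall t x x' j1 j2, size t = n -> uniq t -> x != x' ->
  (j1 < n)%N -> (j2 < n)%N ->
  EE t (fun s => (index x s == j1) && (index x' s == j2))
   <= wh / ((INR n - INR j1) * wl) * (wh / ((INR n - INR j2) * wl)).
Proof.
elim: n => [|n IH] t x x' j1 j2 st ut nx j1n j2n //.
case: j1 j1n => [|j1] j1n.
  by rewrite -st; apply EE_joint0 => //; rewrite st.
case: j2 j2n => [|j2] j2n.
  rewrite (EE_ext _ (Q := fun s => (index x' s == 0%N) && (index x s == j1.+1))); last first.
    by move=> s; rewrite andbC.
  rewrite Rmult_comm -st; apply EE_joint0 => //; first by rewrite eq_sym.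
  by rewrite st.
have n0 : (0 < size t)%N by rewrite st.
rewrite EE_decomp //; apply avg_le => // y yt.
have M0 : 0 <= wh / ((INR n.+1 - INR j1.+1) * wl) * (wh / ((INR n.+1 - INR j2.+1) * wl)).
  by apply Rmult_le_pos; apply Rlt_le, B_pos.
case: (eqVneq y x) => [->|ne].
  by rewrite (EE_ext _ (Q := fun=> false)) ?EE_false // => s /=; rewrite eqxx.
case: (eqVneq y x') => [->|ne'].
  by rewrite (EE_ext _ (Q := fun=> false)) ?EE_false // => s /=; rewrite eqxx andbF.
rewrite (EE_ext _ (Q := fun s => (index x s == j1) && (index x' s == j2))); last first.
  by move=> s /=; rewrite (negbTE ne) (negbTE ne').
have := B_shift j1 n0; have := B_shift j2 n0; rewrite st /= => <- <-.
apply IH => //; first by rewrite size_rem // st.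
exact: rem_uniq.
Qed.

Definition fG m := INR (m - 2) * wl / (INR (m - 2) * wl + 2 * wh).
Fixpoint G n l := match l with 0 => 1 | l'.+1 => fG n * G n.-1 l' end.

Lemma fG_ge0 m : 0 <= fG m.
Proof.
have := pos_INR (m - 2); move=> h.
apply Rmult_le_pos; first by apply Rmult_le_pos; lra.
apply Rlt_le, Rinv_0_lt_compat; have := Rmult_le_pos _ _ h (Rlt_le _ _ wl_pos); lra.
Qed.

Lemma G_ge0 n l : 0 <= G n l.
Proof. elim: l n => [|l IH] n /=; [lra | apply Rmult_le_pos; [exact: fG_ge0 | exact: IH]]. Qed.

Lemma ratio_le r R0' W c : 0 <= r -> r <= R0' -> 0 < W -> W <= c ->
  r / (r + c) <= R0' / (R0' + W).
Proof.
move=> h1 h2 h3 h4.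
replace (R0' / (R0' + W)) with (r / (r + c) + (R0' * c - r * W) / ((R0' + W) * (r + c))) by (field; lra).
have : 0 <= (R0' * c - r * W) / ((R0' + W) * (r + c)); last lra.
apply Rmult_le_pos; first nra.
apply Rlt_le, Rinv_0_lt_compat; nra.
Qed.

Lemma EE_lower l : forall t x x', uniq t -> x \in t -> x' \in t -> x != x' ->
  G (size t) l <= EE t (fun s => (l <= index x s)%N && (l <= index x' s)%N).
Proof.
elim: l => [|l IH] t x x' ut xt x't nx.
  by rewrite (EE_ext _ (Q := fun=> true)) ?EE_true //=; lra.
have n0 : (0 < size t)%N by case: t xt {ut x't} => //.
have x'r : x' \in rem x t by rewrite (mem_rem_uniq _ ut) inE eq_sym nx.
have n2 : (2 <= size t)%N.
  have : (0 < size (rem x t))%N by case: (rem x t) x'r.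
  by rewrite size_rem //; case: (size t) n0 => // [[|m]].
set G' := G (size t).-1 l.
have G'0 : 0 <= G' by exact: G_ge0.
set Rr := \big[Rplus/R0]_(y <- t) (if (y != x) && (y != x') then w y else 0).
have swE : sw t = Rr + w x + w x'.
  have -> : sw t = \big[Rplus/R0]_(y <- t) ((if (y != x) && (y != x') then w y else 0)
      + (if y == x then w x else 0) + (if y == x' then w x' else 0)).
    apply: eq_bigr => y _; case: (eqVneq y x) => [->|ne1]; first by rewrite (negbTE nx) /=; ring.
    by case: (eqVneq y x') => [->|ne2] /=; ring.
  by rewrite !big_split /= !sumR_pick // xt x't.
have Rlb : INR (size t) * wl <= Rr + wl + wl.
  rewrite -sumR_const.
  have -> : Rr + wl + wl = \big[Rplus/R0]_(y <- t) ((if (y != x) && (y != x') then w y else 0)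
      + (if y == x then wl else 0) + (if y == x' then wl else 0)).
    by rewrite !big_split /= !sumR_pick // xt x't.
  apply sumR_le => y _; have := wb y.
  case: (eqVneq y x) => [->|ne1]; first by rewrite (negbTE nx) /=; lra.
  by case: (eqVneq y x') => [->|ne2] /=; lra.
rewrite EE_decomp //.
apply Rle_trans with (\big[Rplus/R0]_(y <- t) (w y / sw t * (if (y != x) && (y != x') then G' else 0))).
  have -> : \big[Rplus/R0]_(y <- t) (w y / sw t * (if (y != x) && (y != x') then G' else 0))
     = G' / sw t * Rr.
    by rewrite /Rr sumR_distr; apply: eq_bigr => y _; case: (_ && _); rewrite /Rdiv; ring.
  rewrite /= -/G' Rmult_comm /Rdiv Rmult_assoc; apply Rmult_le_compat_l => //.
  rewrite -/(Rdiv _ _) Rmult_comm -/(Rdiv _ _) swE Rplus_assoc /fG.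
  have W0 : 0 < w x + w x' by have := wpos x; have := wpos x'; lra.
  have -> : INR (size t - 2) = INR (size t) - 2.
    by rewrite minus_INR; [simpl; ring | apply/leP].
  apply ratio_le => //.
  - apply Rmult_le_pos; last lra.
    by rewrite -(minus_INR _ 2); [exact: pos_INR | apply/leP].
  - nra.
  - have := wb x; have := wb x'; lra.
apply sumR_le => y yt; apply Rmult_le_compat_l.
  apply Rlt_le, Rdiv_lt_0_compat; [exact: wpos | exact: sw_pos].
case: (eqVneq y x) => [->|ne1].
  by rewrite (EE_ext _ (Q := fun=> false)) ?EE_false /=; [lra | move=> s /=; rewrite eqxx].
case: (eqVneq y x') => [->|ne2] /=.
  by rewrite (EE_ext _ (Q := fun=> false)) ?EE_false /=; [lra | move=> s /=; rewrite eqxx andbF].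
rewrite (EE_ext _ (Q := fun s => (l <= index x s)%N && (l <= index x' s)%N)); last first.
  by move=> s /=; rewrite (negbTE ne1) (negbTE ne2).
rewrite /G' -(size_rem yt); apply IH => //.
- exact: rem_uniq.
- by rewrite (mem_rem_uniq _ ut) inE eq_sym ne1 xt.
- by rewrite (mem_rem_uniq _ ut) inE eq_sym ne2 x't.
Qed.
End PL.

Lemma exp_mono x y : x <= y -> exp x <= exp y.
Proof. move=> [h|->]; [left; exact: exp_increasing | lra]. Qed.

Lemma ln_le_sub1 u : 0 < u -> ln u <= u - 1.
Proof.
move=> u0; destruct (Rle_or_lt (ln u) (u - 1)) as [h|h] => //.
have := exp_increasing _ _ h; rewrite exp_ln //; have := exp_ineq1_le (u - 1); lra.
Qed.

Lemma key_factor m a : 1 < m -> 0 <= a -> Rpower ((m - 1) / m) a <= m / (m + a).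
Proof.
move=> m1 a0; rewrite /Rpower.
have u0 : 0 < (m - 1) / m by apply Rdiv_lt_0_compat; lra.
have h1 : a * ln ((m - 1) / m) <= - (a / m).
  have := @ln_le_sub1 _ u0.
  have -> : (m - 1) / m - 1 = - / m by field; lra.
  move=> h; replace (- (a / m)) with (a * - / m) by (field; lra).
  by apply Rmult_le_compat_l.
apply Rle_trans with (exp (- (a / m))); first exact: exp_mono.
rewrite exp_Ropp.
have e1 := exp_ineq1_le (a / m).
have am : 0 <= a / m by apply Rmult_le_pos; [lra | apply Rlt_le, Rinv_0_lt_compat; lra].
replace (m / (m + a)) with (/ (1 + a / m)) by (field; lra).
apply Rinv_le_contravar; lra.
Qed.

Definition hH a (m : nat) := (INR m - 2) / INR m * Rpower ((INR m - 1) / INR m) a.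
Fixpoint H a n l := match l with 0 => 1 | l'.+1 => hH a n * H a n.-1 l' end.

Lemma fG_ge_hH wl wh m : 0 < wl -> wl <= wh -> (2 <= m)%N ->
  hH (2 * (wh / wl) - 2) m <= fG wl wh m.
Proof.
move=> wl0 wlh m2.
have a0 : 0 <= 2 * (wh / wl) - 2.
  have : 1 <= wh / wl by apply (Rmult_le_reg_r wl) => //; field_simplify; lra.
  lra.
have mR : 2 <= INR m by apply (le_INR 2); apply/leP.
rewrite /fG minus_INR; last by apply/leP.
have -> : (INR m - INR 2) * wl / ((INR m - INR 2) * wl + 2 * wh)
   = (INR m - 2) / INR m * (INR m / (INR m + (2 * (wh / wl) - 2))).
  simpl INR; field; split; [lra | split; [|lra]].
  have : 0 < wh / wl by apply Rdiv_lt_0_compat; lra.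
  move=> h; have : 0 < (INR m - (1 + 1)) * wl + 2 * wh.
    have := Rmult_le_pos (INR m - (1 + 1)) wl; lra.
  lra.
rewrite /hH; apply Rmult_le_compat_l.
  apply Rmult_le_pos; [lra | apply Rlt_le, Rinv_0_lt_compat; lra].
apply key_factor => //; lra.
Qed.

Lemma hH_ge0 a m : (2 <= m)%N -> 0 <= hH a m.
Proof.
move=> m2; have mR : 2 <= INR m by apply (le_INR 2); apply/leP.
rewrite /hH; apply Rmult_le_pos.
  apply Rmult_le_pos; [lra | apply Rlt_le, Rinv_0_lt_compat; lra].
rewrite /Rpower; apply Rlt_le, exp_pos.
Qed.

Lemma G_ge_H wl wh l : 0 < wl -> wl <= wh -> forall n, (l < n)%N ->
  0 <= H (2 * (wh / wl) - 2) n l <= G wl wh n l.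
Proof.
move=> wl0 wlh; elim: l => [|l IH] n ln /=; first lra.
have n2 : (2 <= n)%N by apply: leq_ltn_trans ln.
have := IH n.-1; case: n ln n2 => // n ln n2 /=; move/(_ ln) => [h1 h2].
have h3 := hH_ge0 (2 * (wh / wl) - 2) n2.
have h4 := fG_ge_hH wl0 wlh n2.
split; first exact: Rmult_le_pos.
by apply Rmult_le_compat.
Qed.

Lemma H_closed a l : forall n, (l < n)%N ->
  INR n * (INR n - 1) * H a n l
  = (INR n - INR l) * (INR n - INR l - 1) * Rpower ((INR n - INR l) / INR n) a.
Proof.
elim: l => [|l IH] n ln.
  have n0 : 0 < INR n by apply lt_0_INR; apply/ltP.
  rewrite /= /Rpower Rminus_0_r /Rdiv Rinv_r; last lra.
  by rewrite ln_1 Rmult_0_r exp_0; ring.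
have n2 : (2 <= n)%N by apply: leq_ltn_trans ln.
case: n ln n2 => // n ln n2.
have IHn := IH n ln. rewrite [H a n.+1 l.+1]/=.
have nR : 1 <= INR n by apply (le_INR 1); apply/leP.
have lR : INR l + 1 <= INR n by rewrite -S_INR; apply le_INR; apply/leP.
rewrite !S_INR.
rewrite /hH S_INR.
have -> : (INR n + 1) * (INR n + 1 - 1) *
   ((INR n + 1 - 2) / (INR n + 1) * Rpower ((INR n + 1 - 1) / (INR n + 1)) a * H a n l)
   = Rpower ((INR n + 1 - 1) / (INR n + 1)) a * (INR n * (INR n - 1) * H a n l).
  field; lra.
have E : Rpower ((INR n + 1 - 1) / (INR n + 1)) a * Rpower ((INR n - INR l) / INR n) a
   = Rpower ((INR n + 1 - (INR l + 1)) / (INR n + 1)) a.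
  rewrite Rpower_mult_distr; first (f_equal; field; lra).
  - apply Rdiv_lt_0_compat; lra.
  - apply Rdiv_lt_0_compat; lra.
rewrite IHn -E; ring.
Qed.

Lemma prodform (T : eqType) (w : T -> R) (wpos : forall x, 0 < w x) n (f : 'I_n -> T) :
  \big[Rmult/R1]_(i < n | (i.+1 < n)%N)
     Rdiv (w (f i)) (\big[Rplus/R0]_(i' < n | (i <= i')%N) w (f i'))
  = plr w (codom f).
Proof.
elim: n f => [|n IH] f.
  by rewrite big_ord0 codomE enum_ord0.
rewrite codomE enum_ordSl /= -map_comp -codomE -IH.
rewrite big_mkcond big_ord_recl /=.
set g := f \o lift ord0.
have Einner : forall i : 'I_n,
  \big[Rplus/R0]_(i' < n.+1 | (bump 0 i <= i')%N) w (f i')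
  = \big[Rplus/R0]_(i' < n | (i <= i')%N) w (g i').
  move=> i; rewrite big_mkcond big_ord_recl /= Rplus_0_l [RHS]big_mkcond.
  apply: eq_bigr => i' _; by rewrite /g /bump /=.
have -> : \big[Rmult/R1]_(i < n)
    (if ((bump 0 i).+1 < n.+1)%N then
      w (f (lift ord0 i)) / \big[Rplus/R0]_(i' < n.+1 | (bump 0 i <= i')%N) w (f i')
     else 1)
  = \big[Rmult/R1]_(i < n | (i.+1 < n)%N) (w (g i) / \big[Rplus/R0]_(i' < n | (i <= i')%N) w (g i')).
  rewrite [RHS]big_mkcond; apply: eq_bigr => i _; rewrite Einner.
  by rewrite /bump /= add1n ltnS.
have Esw : sw w (codom g) = \big[Rplus/R0]_(i < n) w (g i).
  by rewrite /sw codomE big_map big_enum.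
rewrite Esw.
rewrite /g in Einner Esw *; clear g.
case: n f IH Einner Esw => [|n] f IH Einner Esw.
  rewrite !big_ord0 /=; have := wpos (f ord0); move=> h; field; lra.
rewrite /= big_mkcond big_ord_recl /=.
reflexivity.
Qed.

Lemma codom_inj d n : injective (fun f : {ffun 'I_n -> 'I_d} => codom f).
Proof.
move=> f g E; apply/ffunP => i.
have := congr1 (fun s => nth (f i) s (enum_rank i)) E.
by rewrite /= !nth_codom enum_rankK.
Qed.

Lemma index_codom d n (sigma : {ffun 'I_n -> 'I_d}) j :
  injectiveb sigma -> index (sigma j) (codom sigma) = j.
Proof.
move=> /injectiveP inj; rewrite codomE (index_map inj) index_enum_ord //.
Qed.

Lemma ranking_codom d (S : {set 'I_d}) (sigma : {ffun 'I_#|S| -> 'I_d}) :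
  ranking sigma -> perm_eq (codom sigma) (enum S).
Proof.
move=> /andP[inj /forallP inS].
have u1 : uniq (codom sigma) by move: inj; rewrite /injectiveb /dinjectiveb codomE.
apply: uniq_perm => //; first exact: enum_uniq.
have sub : {subset codom sigma <= enum S}.
  by move=> y /codomP[j ->]; rewrite mem_enum.
have := uniq_min_size u1 sub; rewrite size_codom card_ord -cardE leqnn.
by move=> /(_ isT) [].
Qed.

Lemma PL_P_EE d (theta : 'I_d -> R) (S : {set 'I_d}) (x0 : 'I_d)
  (E : {ffun 'I_#|S| -> 'I_d} -> bool) (P : seq 'I_d -> bool) :
  (forall sigma, ranking sigma -> E sigma = P (codom sigma)) ->
  PL_P theta S E = EE (fun x => exp (theta x)) (enum S) P.
Proof.
move=> HE; rewrite /PL_P.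
set w := fun x => exp (theta x).
have wpos : forall x, 0 < w x by move=> x; exact: exp_pos.
rewrite big_mkcondr.
have -> : \big[Rplus/R0]_(sigma : {ffun 'I_#|S| -> 'I_d} | ranking sigma)
   (if E sigma then PL_prob theta sigma else R0)
   = \big[Rplus/R0]_(sigma : {ffun 'I_#|S| -> 'I_d} | ranking sigma)
   (if P (codom sigma) then plr w (codom sigma) else 0).
  apply: eq_bigr => sigma rs; rewrite HE //.
  by rewrite /PL_prob (prodform wpos).
rewrite -big_filter -(big_map (fun f : {ffun 'I_#|S| -> 'I_d} => codom f) xpredT
  (fun s => if P s then plr w s else 0)).
rewrite /EE; apply: perm_big; apply: uniq_perm.
- rewrite map_inj_uniq; last exact: codom_inj.
  by apply: filter_uniq; exact: index_enum_uniq.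
- exact: permutations_uniq.
move=> s; rewrite mem_permutations; apply/idP/idP.
  by move=> /mapP[sigma]; rewrite mem_filter => /andP[rs _] ->; exact: ranking_codom.
move=> ps; have sz : size s = #|S| by rewrite (perm_size ps) cardE.
pose sigma := [ffun j : 'I_#|S| => nth x0 s j].
have cs : codom sigma = s.
  rewrite codomE -[RHS](mkseq_nth x0) sz /mkseq -val_enum_ord -map_comp.
  by apply: eq_map => j; rewrite /= ffunE.
have rs : ranking sigma.
  apply/andP; split.
    by rewrite /injectiveb /dinjectiveb -codomE cs (perm_uniq ps) enum_uniq.
  apply/forallP => j; rewrite ffunE -mem_enum -(perm_mem ps) mem_nth // sz ltn_ord //.
apply/mapP; exists sigma => //; rewrite mem_filter rs; exact: mem_index_enum.
Qed.

Lemma in_codom d (S : {set 'I_d}) (sigma : {ffun 'I_#|S| -> 'I_d}) x :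
  ranking sigma -> x \in S -> exists j, x = sigma j.
Proof.
move=> rs xS; apply/codomP; rewrite (perm_mem (ranking_codom rs)) mem_enum //.
Qed.

Lemma pos_is_codom d (S : {set 'I_d}) (sigma : {ffun 'I_#|S| -> 'I_d}) x p :
  ranking sigma -> x \in S -> pos_is sigma x p = ((index x (codom sigma)).+1 == p).
Proof.
move=> rs xS; have inj : injectiveb sigma by case/andP: rs.
have [j ->] := in_codom rs xS; rewrite index_codom //.
apply/existsP/idP => [[j' /andP[/eqP E1 E2]] | H].
  by move/injectiveP: inj => inj; rewrite -(inj _ _ E1).
by exists j; rewrite eqxx.
Qed.

Lemma pos_gt_codom d (S : {set 'I_d}) (sigma : {ffun 'I_#|S| -> 'I_d}) x l :
  ranking sigma -> x \in S -> pos_gt sigma x l = (l <= index x (codom sigma))%N.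
Proof.
move=> rs xS; have inj : injectiveb sigma by case/andP: rs.
have [j ->] := in_codom rs xS; rewrite index_codom //.
apply/existsP/idP => [[j' /andP[/eqP E1 E2]] | H].
  by move/injectiveP: inj => inj; rewrite -(inj _ _ E1).
by exists j; rewrite eqxx.
Qed.

Lemma num_bound2 e D : 1 <= e -> 1 <= D ->
  e / ((D + 1) * / e) <= (e * e * e * e * e * e) / D.
Proof.
move=> e1 D1.
have -> : e / ((D + 1) * / e) = (e * e) * / (D + 1) by field; lra.
have h3 : 1 <= e * e by nra.
have h4 : 1 <= e * e * e * e by nra.
have h6 : e * e <= e * e * e * e * e * e by nra.
unfold Rdiv; apply Rmult_le_compat;
  [nra | apply Rlt_le, Rinv_0_lt_compat; lra | exact h6 | apply Rinv_le_contravar; lra].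
Qed.

Lemma num_bound3 e D1 D2 : 1 <= e -> 0 < D1 -> 1 <= D2 ->
  e / ((D1 + 2) * / e) * (e / ((D2 + 1) * / e))
  <= (e * e * e * e * e * e * e * e * e * e) / (D1 * D2).
Proof.
move=> e1 h1 h2.
have -> : e / ((D1 + 2) * / e) * (e / ((D2 + 1) * / e))
   = (e * e * e * e) * / ((D1 + 2) * (D2 + 1)) by field; lra.
have h3 : 1 <= e * e by nra.
have h4 : 1 <= e * e * e by nra.
have h5 : 1 <= e * e * e * e by nra.
have h6 : e * e * e * e <= e * e * e * e * e * e * e * e * e * e.
  have : 1 <= e * e * e * e * e * e by nra.
  nra.
unfold Rdiv; apply Rmult_le_compat;
  [nra | apply Rlt_le, Rinv_0_lt_compat; nra | exact h6 | apply Rinv_le_contravar; nra].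
Qed.

Unset Implicit Arguments.

Theorem lemma4 (d : nat) (theta : 'I_d -> R) (b : R) (S : {set 'I_d})
  (hS : (2 <= #|S|)%N)
  (hb : forall i, Rabs (theta i) <= b)
  (i i' : 'I_d) (hi : i \in S) (hi' : i' \in S) (hii' : i != i')
  (l l1 l2 : nat)
  (hl : (1 <= l <= #|S| - 1)%N) (hl1 : (1 <= l1 <= #|S| - 1)%N)
  (hl2 : (1 <= l2 <= #|S| - 1)%N) :
  let k := INR #|S| in
  PL_P theta S (fun sigma => pos_gt sigma i l && pos_gt sigma i' l) >=
     exp (-4 * b) * (k - INR l) * (k - INR l - 1) / (k * (k - 1))
     * Rpower (1 - INR l / k) (2 * exp (2 * b) - 2)
  /\ PL_P theta S (fun sigma => pos_is sigma i l) <= exp (6 * b) / (k - INR l)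
  /\ ((k - INR l1 - 1) * (k - INR l2) <> 0 ->
      PL_P theta S (fun sigma => pos_is sigma i l1 && pos_is sigma i' l2)
        <= exp (10 * b) / ((k - INR l1 - 1) * (k - INR l2))).
Proof.
move=> k.
have b0 : 0 <= b by have := hb i; have := Rabs_pos (theta i); lra.
pose w := fun x => exp (theta x).
have wpos : forall x, 0 < w x by move=> x; exact: exp_pos.
have wb : forall x, exp (- b) <= w x <= exp b.
  move=> x; have := hb x; have := Rle_abs (theta x); have := Rle_abs (- theta x).
  rewrite Rabs_Ropp => h1 h2 h3; split; apply exp_mono; lra.
have wl0 : 0 < exp (- b) := exp_pos _.
have wh0 : 0 < exp b := exp_pos _.
have ut : uniq (enum S) := enum_uniq _.
have st : size (enum S) = #|S| by rewrite cardE.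
have e1 : 1 <= exp b by rewrite -exp_0; apply exp_mono.
have eb : exp (- b) = / exp b by rewrite exp_Ropp.
have iS : i \in enum S by rewrite mem_enum.
have i'S : i' \in enum S by rewrite mem_enum.
have small : forall m, (1 <= m <= #|S| - 1)%N -> (m.-1 < #|S|)%N /\ (m < #|S|)%N
     /\ INR m.-1 = INR m - 1 /\ INR m + 1 <= k.
  move=> m /andP[m1 m2].
  have mS : (m < #|S|)%N by apply: leq_ltn_trans m2 _; rewrite subn1 ltn_predL; exact: ltnW hS.
  split; first by apply: leq_ltn_trans mS; exact: leq_pred.
  split => //; split; first by rewrite INR_pred.
  by rewrite -S_INR; apply le_INR; apply/leP.
have kpos : 2 <= k by apply (le_INR 2); apply/leP.
split; [|split].
-
  have [_ [lS [_ lk]]] := small l hl.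
  rewrite (@PL_P_EE _ _ _ i _ (fun s => (l <= index i s)%N && (l <= index i' s)%N)); last first.
    by move=> sigma rs; rewrite !pos_gt_codom.
  have G1 := EE_lower wpos wl0 wb wh0 l ut iS i'S hii'.
  rewrite st in G1.
  have wlh : exp (- b) <= exp b by apply exp_mono; lra.
  have [H0 H1] := G_ge_H wl0 wlh lS.
  have HC := H_closed (2 * (exp b / exp (- b)) - 2) lS.
  have Ea : exp b / exp (- b) = exp (2 * b).
    by rewrite eb /Rdiv Rinv_inv -exp_plus; f_equal; ring.
  rewrite Ea in H0 H1 HC.
  rewrite -/k in HC.
  have -> : 1 - INR l / k = (k - INR l) / k by field; lra.
  set Rp := Rpower ((k - INR l) / k) (2 * exp (2 * b) - 2) in HC *.
  set Hv := H (2 * exp (2 * b) - 2) #|S| l in HC H0 H1 *.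
  have e4 : exp (-4 * b) <= 1 by rewrite -exp_0; apply exp_mono; lra.
  have -> : exp (-4 * b) * (k - INR l) * (k - INR l - 1) / (k * (k - 1)) * Rp
     = exp (-4 * b) * Hv.
    have Hval : Hv = (k - INR l) * (k - INR l - 1) * Rp / (k * (k - 1)).
      by rewrite -HC; field; lra.
    rewrite Hval; field; lra.
  apply Rle_ge; apply Rle_trans with Hv; last first.
    apply Rle_trans with (G (exp (- b)) (exp b) #|S| l); [exact H1 | exact G1].
  have := exp_pos (-4 * b); nra.
-
  have [lm1 [lS [lR lk]]] := small l hl.
  rewrite (@PL_P_EE _ _ _ i _ (fun s => index i s == l.-1)); last first.
    move=> sigma rs; rewrite pos_is_codom //.
    by case/andP: hl; case: l {lm1 lS lR lk} => // l _ _ /=.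
  apply Rle_trans with (exp b / ((INR #|S| - INR l.-1) * exp (- b))).
    have := EE_pos wpos wl0 wb wh0 (j := l.-1) i ut; rewrite -!cardE; apply; exact: lm1.
  rewrite lR eb -/k.
  replace (6 * b) with (b + b + b + b + b + b) by ring; rewrite !exp_plus.
  have -> : k - (INR l - 1) = (k - INR l) + 1 by ring.
  apply num_bound2 => //; lra.
-
  move=> nz.
  have [l1S [_ [l1R l1k]]] := small l1 hl1.
  have [l2S [_ [l2R l2k]]] := small l2 hl2.
  rewrite (@PL_P_EE _ _ _ i _ (fun s => (index i s == l1.-1) && (index i' s == l2.-1))); last first.
    move=> sigma rs; rewrite !pos_is_codom //.
    case/andP: hl1; case/andP: hl2; case: l1 {l1S l1R l1k nz}; case: l2 {l2S l2R l2k} => //.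
  apply Rle_trans with (exp b / ((INR #|S| - INR l1.-1) * exp (- b)) *
                        (exp b / ((INR #|S| - INR l2.-1) * exp (- b)))).
    exact: EE_joint.
  rewrite l1R l2R eb -/k.
  replace (10 * b) with (b + b + b + b + b + b + b + b + b + b) by ring; rewrite !exp_plus.
  have D1 : 0 < k - INR l1 - 1.
    have : 0 <= k - INR l1 - 1 by lra.
    move=> [h|h] //; exfalso; apply: nz; rewrite -h; ring.
  have -> : k - (INR l1 - 1) = (k - INR l1 - 1) + 2 by ring.
  have -> : k - (INR l2 - 1) = (k - INR l2) + 1 by ring.
  apply num_bound3 => //; lra.
Qed.
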